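(* Let $n\ge2$ and for $r\in(0,\pi)$ let $h_r$ be the solution on $[0,r)$ of $$h_r''(u)(h_r'(u))^{n-1}=e^{h_r(u)}(\sin u)^{n-1},\qquad \lim_{u\to r}h_r(u)=\infty,$$ real-analytic in $u^2$. Then $h_r(0)\ge -\pi\, n^{1/n}\pi^{1/n}$ for all $r\in(0,\pi)$; consequently $\inf_{[0,r)}h_r\ge -\pi\,n^{1/n}\pi^{1/n}$.
   Context: This is the ODE for the Kähler potential (as a function of $u=\sqrt\rho$, $\rho(x,v)=4|v|^2$) of the complete Kähler–Einstein metric of Ricci curvature $-1$ on the Grauert tube $T^rH^n$ over real hyperbolic space $H^n$, whose maximal radius is $\pi$. *)

(* Defs.v *)
From Stdlib Require Import Reals Lra.
Open Scope R_scope.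

Definition real_analytic_at (g : R -> R) (t0 : R) : Prop :=
  exists (a : nat -> R) (delta : R), 0 < delta /\
    forall t, Rabs (t - t0) < delta ->
      infinite_sum (fun k => a k * (t - t0) ^ k) (g t).

Definition analytic_in_u2 (h : R -> R) (r : R) : Prop :=
  exists g : R -> R,
    (forall t, 0 <= t < r ^ 2 -> real_analytic_at g t) /\
    (forall u, - r < u < r -> h u = g (u ^ 2)).

Definition tends_to_infty_left (h : R -> R) (r : R) : Prop :=
  forall M : R, exists delta : R, 0 < delta /\
    forall u, r - delta < u < r -> M < h u.

Definition solves_ode (n : nat) (r : R) (h : R -> R) : Prop :=
  exists h1 h2 : R -> R,
    (forall u, - r < u < r -> derivable_pt_lim h u (h1 u)) /\
    (forall u, - r < u < r -> derivable_pt_lim h1 u (h2 u)) /\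
    (forall u, 0 <= u < r ->
       h2 u * (h1 u) ^ (n - 1) = exp (h u) * (sin u) ^ (n - 1)).

(* Main.v *)
Require Import Defs.
From Stdlib Require Import Reals Lra Lia Ranalysis5.
Open Scope R_scope.

Lemma mvt_mono (f f' : R -> R) a b : a <= b ->
  (forall c, a <= c <= b -> derivable_pt_lim f c (f' c)) ->
  (forall c, a < c < b -> 0 <= f' c) -> f a <= f b.
Proof.
  intros Hab Hd Hp. destruct (Rle_lt_or_eq_dec _ _ Hab) as [H|H]; [|subst; lra].
  destruct (MVT_cor2 f f' a b H Hd) as [c [E Hc]].
  assert (0 <= f' c * (b - a)) by (apply Rmult_le_pos; [apply Hp; lra| lra]). lra.
Qed.

Lemma mvt_bound (f f' : R -> R) a b K : a <= b ->
  (forall c, a <= c <= b -> derivable_pt_lim f c (f' c)) ->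
  (forall c, a < c < b -> f' c <= K) -> f b - f a <= K * (b - a).
Proof.
  intros Hab Hd Hp. destruct (Rle_lt_or_eq_dec _ _ Hab) as [H|H]; [|subst; lra].
  destruct (MVT_cor2 f f' a b H Hd) as [c [E Hc]].
  rewrite E. apply Rmult_le_compat_r; [lra|]. apply Hp; lra.
Qed.

Lemma cont_of (f : R -> R) x l : derivable_pt_lim f x l -> continuity_pt f x.
Proof. intro H. apply derivable_continuous_pt. exists l. exact H. Qed.

Lemma even_deriv0 (h : R -> R) r l : 0 < r ->
  (forall u, - r < u < r -> h (- u) = h u) ->
  derivable_pt_lim h 0 l -> l = 0.
Proof.
  intros Hr Hev Hd.
  destruct (Req_dec l 0) as [|Hl]; [assumption|exfalso].
  assert (He : 0 < Rabs l / 2) by (apply Rabs_pos_lt in Hl; lra).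
  destruct (Hd _ He) as [[d Hdp] Hdd].
  set (t := Rmin d r / 2).
  assert (Ht : 0 < t /\ t < d /\ t < r).
  { unfold t. split; [apply Rlt_le_trans with (Rmin d r / 2); [|lra]; 
    assert (0 < Rmin d r) by (apply Rmin_glb_lt; lra); lra|].
    split; assert (Rmin d r <= d) by apply Rmin_l; assert (Rmin d r <= r) by apply Rmin_r;
    assert (0 < Rmin d r) by (apply Rmin_glb_lt; lra); lra. }
  simpl in Hdd.
  assert (Ha : t <> 0) by (apply Rgt_not_eq; lra).
  assert (Hb : Rabs t < d) by (rewrite Rabs_pos_eq; lra).
  assert (Ha' : - t <> 0) by (apply Rlt_not_eq; lra).
  assert (Hb' : Rabs (- t) < d) by (rewrite Rabs_Ropp, Rabs_pos_eq; lra).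
  assert (H1 := Hdd t Ha Hb).
  assert (H2 := Hdd (- t) Ha' Hb').
  rewrite !Rplus_0_l in H1, H2. rewrite Hev in H2 by lra.
  replace ((h t - h 0) / - t - l) with (- ((h t - h 0) / t + l)) in H2 by (field; lra).
  rewrite Rabs_Ropp in H2.
  set (q := (h t - h 0) / t) in *.
  assert (H : Rabs (2 * l) <= Rabs (q + l) + Rabs (- (q - l))).
  { replace (2 * l) with ((q + l) + - (q - l)) by ring. apply Rabs_triang. }
  rewrite Rabs_Ropp in H.
  rewrite Rabs_mult, (Rabs_pos_eq 2) in H by lra. lra.
Qed.

Theorem lemma4p1 (n : nat) (hn : (2 <= n)%nat) (r : R) (hr : 0 < r < PI)
  (h : R -> R)
  (Hode : solves_ode n r h)
  (Hlim : tends_to_infty_left h r)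
  (Han : analytic_in_u2 h r) :
  h 0 >= - PI * Rpower (INR n) (/ INR n) * Rpower PI (/ INR n) /\
  (forall u, 0 <= u < r ->
     h u >= - PI * Rpower (INR n) (/ INR n) * Rpower PI (/ INR n)).
Proof.
  destruct Hode as [v [h2 [Hd1 [Hd2 Hode]]]].
  destruct Han as [g [_ Hg]].
  assert (Hev : forall u, - r < u < r -> h (- u) = h u).
  { intros u Hu. rewrite !Hg by lra. f_equal. ring. }
  assert (Hv0 : v 0 = 0) by (apply (even_deriv0 h r); [lra|exact Hev|apply Hd1; lra]).
  assert (Hn0 : 0 < INR n) by (apply lt_0_INR; lia).
  set (w := fun x => v x ^ n).
  set (D := fun x => INR n * (exp (h x) * sin x ^ (n - 1))).
  assert (Hdw : forall u, 0 <= u < r -> derivable_pt_lim w u (D u)).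
  { intros u Hu. unfold D.
    replace (INR n * (exp (h u) * sin u ^ (n - 1))) with
      ((INR n * v u ^ Init.Nat.pred n) * h2 u).
    2:{ rewrite <- Hode by lra. replace (Init.Nat.pred n) with (n - 1)%nat by lia. ring. }
    apply (derivable_pt_lim_comp v (fun y => y ^ n)); [apply Hd2; lra|].
    apply derivable_pt_lim_pow. }
  assert (HD0 : forall u, 0 <= u < r -> 0 <= D u).
  { intros u Hu. unfold D. apply Rmult_le_pos; [lra|]. apply Rmult_le_pos;
    [left; apply exp_pos|]. apply pow_le, sin_ge_0; lra. }
  assert (Hwm : forall a b, 0 <= a <= b -> b < r -> w a <= w b).
  { intros a b Hab Hb. apply (mvt_mono w D); [lra| |].
    - intros c Hc; apply Hdw; lra.
    - intros c Hc; apply HD0; lra. }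
  assert (Hw0 : w 0 = 0) by (unfold w; rewrite Hv0; apply pow_ne_zero; lia).
  assert (Hvp : forall u, 0 <= u < r -> 0 <= v u).
  { intros u1 Hu1. destruct (Rle_or_lt 0 (v u1)) as [|Hneg]; [assumption|exfalso].
    assert (Hwpos : 0 < w u1).
    { assert (0 <= w u1) by (rewrite <- Hw0; apply Hwm; lra).
      assert (w u1 <> 0) by (apply pow_nonzero; lra). lra. }
    assert (Hneg2 : forall u, u1 <= u < r -> v u < 0).
    { intros u Hu. destruct (Rlt_or_le (v u) 0) as [|Hge]; [assumption|exfalso].
      assert (exists t, u1 <= t <= u /\ v t = 0) as [t [Ht Hvt]].
      { destruct Hge as [Hgt|Heq]; [|exists u; split; [lra|auto]].
        assert (u1 < u) by (destruct (Req_dec u1 u); [subst; lra|lra]).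
        destruct (IVT_interv v u1 u) as [t [Ht Hvt]]; try assumption.
        - intros a Ha. apply (cont_of _ _ (h2 a)), Hd2; lra.
        - exists t; auto. }
      assert (w u1 <= w t) by (apply Hwm; lra).
      assert (w t = 0) by (unfold w; rewrite Hvt; apply pow_ne_zero; lia). lra. }
    destruct (Hlim (h u1)) as [d [Hd Hdd]].
    set (u := Rmax (r - d / 2) ((u1 + r) / 2)).
    assert (Hu : r - d < u < r /\ u1 < u).
    { unfold u. assert (r - d/2 <= Rmax (r - d / 2) ((u1 + r) / 2)) by apply Rmax_l.
      assert ((u1 + r) / 2 <= Rmax (r - d / 2) ((u1 + r) / 2)) by apply Rmax_r.
      split; [split|]; try lra. apply Rmax_lub_lt; lra. }
    assert (Hc := Hdd u ltac:(lra)).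
    assert (h u - h u1 <= 0 * (u - u1)).
    { apply (mvt_bound h v); [lra| |].
      - intros c Hc'; apply Hd1; lra.
      - intros c Hc'; left; apply Hneg2; lra. }
    lra. }
  assert (Hhm : forall a b, 0 <= a <= b -> b < r -> h a <= h b).
  { intros a b Hab Hb. apply (mvt_mono h v); [lra| |].
    - intros c Hc; apply Hd1; lra.
    - intros c Hc; apply Hvp; lra. }
  set (C := Rpower (INR n) (/ INR n) * Rpower PI (/ INR n)).
  assert (HPI : 0 < PI) by lra.
  assert (HC : C = Rpower (INR n * PI) (/ INR n)) by (unfold C; apply Rpower_mult_distr; lra).
  assert (HCp : 0 < C) by (rewrite HC; unfold Rpower; apply exp_pos).
  assert (Hmain : h 0 >= - PI * C).
  { destruct (Rge_or_gt (h 0) (- PI * C)) as [|Hlt]; [assumption|exfalso].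
    assert (Hh0 : h 0 < 0) by (assert (0 < PI * C) by (apply Rmult_lt_0_compat; lra); lra).
    destruct (Hlim 0) as [d [Hd Hdd]].
    set (us := Rmax (r - d / 2) (r / 2)).
    assert (Hus : r - d < us < r /\ 0 < us).
    { unfold us. assert (r - d/2 <= Rmax (r - d / 2) (r / 2)) by apply Rmax_l.
      assert (r / 2 <= Rmax (r - d / 2) (r / 2)) by apply Rmax_r.
      split; [split|]; try lra. apply Rmax_lub_lt; lra. }
    assert (Hpos := Hdd us ltac:(lra)).
    destruct (IVT_interv h 0 us) as [t [Ht Hht]]; try lra.
    { intros a Ha. apply (cont_of _ _ (v a)), Hd1; lra. }
    assert (Hle0 : forall s, 0 <= s <= t -> h s <= 0) by (intros s Hs; rewrite <- Hht; apply Hhm; lra).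
    assert (HvC : forall s, 0 <= s <= t -> v s <= C).
    { intros s Hs.
      assert (Hws : w s - w 0 <= INR n * (s - 0)).
      { apply (mvt_bound w D); [lra| |].
        - intros c Hc; apply Hdw; lra.
        - intros c Hc. unfold D. rewrite <- (Rmult_1_r (INR n)) at 2.
          apply Rmult_le_compat_l; [lra|].
          rewrite <- (Rmult_1_r 1). apply Rmult_le_compat.
          + left; apply exp_pos.
          + apply pow_le, sin_ge_0; lra.
          + rewrite <- exp_0. destruct (Rle_lt_or_eq_dec _ _ (Hle0 c ltac:(lra))) as [Hl|Hl];
              [left; apply exp_increasing; exact Hl| rewrite Hl; lra].
          + rewrite <- (pow1 (n-1)). apply pow_incr. split; [apply sin_ge_0; lra| apply SIN_bound]. }
      rewrite Hw0 in Hws.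
      assert (Hwb : w s <= INR n * PI) by (assert (INR n * s <= INR n * PI) by (apply Rmult_le_compat_l; lra); lra).
      destruct (Rle_lt_or_eq_dec _ _ (Hvp s ltac:(lra))) as [Hvs|Hvs]; [|rewrite <- Hvs; lra].
      assert (Hvv : v s = Rpower (w s) (/ INR n)).
      { unfold w. rewrite <- Rpower_pow by lra. rewrite Rpower_mult.
        rewrite Rinv_r by lra. rewrite Rpower_1 by lra. reflexivity. }
      rewrite Hvv, HC. apply Rle_Rpower_l; [left; apply Rinv_0_lt_compat; lra|].
      split; [|exact Hwb]. unfold w. apply pow_lt; lra. }
    assert (h t - h 0 <= C * (t - 0)).
    { apply (mvt_bound h v); [lra| |].
      - intros c Hc; apply Hd1; lra.
      - intros c Hc; apply HvC; lra. }
    assert (C * t < C * PI) by (apply Rmult_lt_compat_l; lra).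
    lra. }
  replace (- PI * Rpower (INR n) (/ INR n) * Rpower PI (/ INR n)) with (- PI * C) by (unfold C; ring).
  split; [exact Hmain|].
  intros u Hu. assert (h 0 <= h u) by (apply Hhm; lra). lra.
Qed.
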